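(* Let $H_P$ be a Hermitian operator on a finite-dimensional Hilbert space with orthonormal eigenbasis $\{|\phi_m\rangle\}_{m=0}^{D-1}$, $H_P|\phi_m\rangle = E_m|\phi_m\rangle$, with $E_0 < E_1 \le E_m$ for all $m\ge1$. Let $\tilde E_0,\tilde E_1\in\mathbb{R}$ and $\delta M_0,\delta M_1>0$ satisfy $|\tilde E_0 - E_0| < \delta M_0$ and $|\tilde E_1 - E_1| < \delta M_1$. Let $|\psi\rangle$ be a normalized state and write $|\psi\rangle = \sqrt{1-\epsilon^2}\,|\phi_0\rangle + \sum_{m\neq0}\epsilon_m|\phi_m\rangle$ with real $\epsilon_m$, $\epsilon^2=\sum_{m\ne0}\epsilon_m^2$. If $$\langle\psi|H_P|\psi\rangle < \tfrac12(\tilde E_0+\tilde E_1) - \tfrac12(\delta M_0+\delta M_1),$$ then $\epsilon^2 \le \tfrac12$, and consequently $\bigl(\langle\psi|H_P|\psi\rangle - E_0\bigr)^2 \le \Delta E^2$, where $\Delta E^2 = \langle\psi|H_P^2|\psi\rangle - \langle\psi|H_P|\psi\rangle^2$.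
   Context: $\tilde E_0,\tilde E_1$ are approximate (pre-estimated) values of the ground and first excited energies $E_0,E_1$, with error bounds $\delta M_0,\delta M_1$. *)

(* Defs.v *)
From HB Require Import structures.
From mathcomp Require Import all_boot all_order all_algebra.
Set Implicit Arguments. Unset Strict Implicit. Unset Printing Implicit Defensive.
Import Order.TTheory GRing.Theory Num.Theory.
Local Open Scope ring_scope.

Definition adjointmx {C : numClosedFieldType} {m n : nat} (A : 'M[C]_(m, n))
  : 'M[C]_(n, m) := map_mx (fun z => z^*) A^T.

Definition hermitian_op {C : numClosedFieldType} {n : nat} (A : 'M[C]_n) : Prop :=
  adjointmx A = A.

Definition expect_val {C : numClosedFieldType} {n : nat} (A : 'M[C]_n) (psi : 'cV[C]_n) : C :=
  (adjointmx psi *m A *m psi) ord0 ord0.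

(* Main.v *)
Require Import Defs.
From HB Require Import structures.
From mathcomp Require Import all_boot all_order all_algebra ring.
Import Order.TTheory GRing.Theory Num.Theory.
Local Open Scope ring_scope.

Lemma adjM (C : numClosedFieldType) m n p (A : 'M[C]_(m,n)) (B : 'M[C]_(n,p)) :
  adjointmx (A *m B) = adjointmx B *m adjointmx A.
Proof.
apply/matrixP => i j; rewrite !mxE rmorph_sum; apply: eq_bigr => k _.
by rewrite !mxE rmorphM mulrC.
Qed.

Lemma quadE (C : numClosedFieldType) n (c : 'cV[C]_n) (d : 'rV[C]_n) :
  (adjointmx c *m diag_mx d *m c) 0 0 = \sum_i d 0 i * `|c i 0| ^+ 2.
Proof.
rewrite mul_mx_diag !mxE; apply: eq_bigr => i _; rewrite !mxE normCKC; ring.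
Qed.

Lemma normE (C : numClosedFieldType) n (c : 'cV[C]_n) :
  (adjointmx c *m c) 0 0 = \sum_i `|c i 0| ^+ 2.
Proof.
rewrite !mxE; apply: eq_bigr => i _; rewrite !mxE normCKC; ring.
Qed.

Lemma sandE (C : numClosedFieldType) n (phi M : 'M[C]_n) (c : 'cV[C]_n) :
  adjointmx (phi *m c) *m M *m (phi *m c) = adjointmx c *m (adjointmx phi *m M *m phi) *m c.
Proof. by rewrite adjM !mulmxA. Qed.

Lemma sum3 (C : numClosedFieldType) (I : finType) (P : pred I) (k1 k2 k3 : C) (f g h : I -> C) :
  \sum_(i | P i) (k1 * f i + k2 * g i + k3 * h i) =
  k1 * \sum_(i | P i) f i + k2 * \sum_(i | P i) g i + k3 * \sum_(i | P i) h i.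
Proof. by rewrite !big_split /= !mulr_sumr. Qed.

Theorem mainTheorem3 (C : numClosedFieldType) (n : nat)
  (HP : 'M[C]_n.+2) (phi : 'M[C]_n.+2) (E : 'I_n.+2 -> C)
  (hHerm : hermitian_op HP)
  (hOrth : adjointmx phi *m phi = 1%:M)
  (hEig : forall m : 'I_n.+2, HP *m col m phi = E m *: col m phi)
  (hE01 : E 0 < E 1)
  (hE1m : forall m : 'I_n.+2, m != 0 -> E 1 <= E m)
  (Et0 Et1 dM0 dM1 : C)
  (hEt0 : Et0 \is Num.real) (hEt1 : Et1 \is Num.real)
  (hdM0 : 0 < dM0) (hdM1 : 0 < dM1)
  (hbound0 : `|Et0 - E 0| < dM0) (hbound1 : `|Et1 - E 1| < dM1)
  (eps : 'I_n.+2 -> C) (hepsR : forall m : 'I_n.+2, eps m \is Num.real)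
  (psi : 'cV[C]_n.+2)
  (hpsiN : adjointmx psi *m psi = 1%:M)
  (hpsi : psi = sqrtC (1 - \sum_(m : 'I_n.+2 | m != 0) eps m ^+ 2) *: col 0 phi
               + \sum_(m : 'I_n.+2 | m != 0) eps m *: col m phi)
  (hexp : expect_val HP psi < (Et0 + Et1) / 2 - (dM0 + dM1) / 2) :
  \sum_(m : 'I_n.+2 | m != 0) eps m ^+ 2 <= 1 / 2 /\
  (expect_val HP psi - E 0) ^+ 2 <= expect_val (HP *m HP) psi - (expect_val HP psi) ^+ 2.
Proof.
set S := \sum_(m : 'I_n.+2 | m != 0) eps m ^+ 2.
set s := sqrtC (1 - S).
pose c : 'cV[C]_n.+2 := \col_i (if i == 0 then s else eps i).
have hpc : psi = phi *m c.
  rewrite hpsi; apply/matrixP => i j; rewrite !mxE summxE [RHS](bigD1 (0 : 'I_n.+2)) //=.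
  rewrite !mxE /c eqxx; congr (_ + _); first by rewrite mulrC. apply: eq_bigr => k hk.
  by rewrite !mxE (negbTE hk) mulrC.
pose D := \row_i E i.
have HPphi : HP *m phi = phi *m diag_mx D.
  apply/matrixP => i j; rewrite mul_mx_diag !mxE.
  have := congr1 (fun M : 'cV[C]_n.+2 => M i 0) (hEig j).
  rewrite !mxE; under eq_bigr do rewrite mxE. by move=> ->; rewrite mulrC.
have K1 : adjointmx phi *m HP *m phi = diag_mx D.
  by rewrite -mulmxA HPphi mulmxA hOrth mul1mx.
have K2 : adjointmx phi *m (HP *m HP) *m phi = diag_mx (\row_j (D 0 j * D 0 j)).
  have H2 : HP *m HP *m phi = phi *m (diag_mx D *m diag_mx D).
    by rewrite -mulmxA HPphi mulmxA HPphi mulmxA.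
  by rewrite -mulmxA H2 mulmxA hOrth mul1mx mulmx_diag.
pose w i := `|c i 0| ^+ 2.
have hX : expect_val HP psi = \sum_i E i * w i.
  rewrite /expect_val hpc sandE K1 quadE; apply: eq_bigr => i _; by rewrite mxE.
have hY : expect_val (HP *m HP) psi = \sum_i (E i * E i) * w i.
  rewrite /expect_val hpc sandE K2 quadE; apply: eq_bigr => i _; by rewrite /D /w !mxE.
have hN : \sum_i w i = 1.
  have E1 : adjointmx psi *m psi = adjointmx c *m c.
    by rewrite hpc adjM -mulmxA (mulmxA (adjointmx phi)) hOrth mul1mx.
  have := congr1 (fun M : 'M[C]_1 => M 0 0) hpsiN.
  by rewrite E1 normE mxE eqxx.
have hw : forall i : 'I_n.+2, i != 0 -> w i = eps i ^+ 2.
  by move=> i hi; rewrite /w mxE (negbTE hi) real_normK.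
have hw0 : forall i, 0 <= w i by move=> i; rewrite exprn_ge0.
have hS : S = \sum_(i | i != 0) w i.
  by apply: eq_bigr => i hi; rewrite hw.
have hsplit : forall F : 'I_n.+2 -> C, \sum_i F i = F 0 + \sum_(i | i != 0) F i.
  by move=> F; rewrite (bigD1 (0 : 'I_n.+2)).
set P1 := \sum_(i | i != 0) E i * w i.
set P2 := \sum_(i | i != 0) E i * E i * w i.
set a := \sum_(i | i != 0) w i * (E i - E 0).
set Q := \sum_(i | i != 0) w i * (E i - E 0) ^+ 2.
set B := \sum_(i | i != 0) w i * (E i - E 0 - 2 * a) ^+ 2.
have hw0e : w 0 = 1 - S by rewrite hS -hN hsplit; ring.
have ha : a = P1 - S * E 0.
  rewrite /a hS (eq_bigr (fun i => 1 * (E i * w i) + (- E 0) * w i + 0 * w i)).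
    by rewrite sum3 -/P1; ring.
  by move=> i _; ring.
have hQ : Q = P2 - 2 * E 0 * P1 + E 0 ^+ 2 * S.
  rewrite /Q hS (eq_bigr (fun i => 1 * (E i * E i * w i) + (- 2 * E 0) * (E i * w i) + E 0 ^+ 2 * w i)).
    by rewrite sum3 -/P1 -/P2; ring.
  by move=> i _; ring.
have hB : B = Q - 4 * a * a + 4 * a ^+ 2 * S.
  rewrite /B hS (eq_bigr (fun i => 1 * (w i * (E i - E 0) ^+ 2) + (- 4 * a) * (w i * (E i - E 0)) + (4 * a ^+ 2) * w i)).
    by rewrite sum3 -/Q -/a; ring.
  by move=> i _; ring.
have hXe : expect_val HP psi = E 0 * w 0 + P1 by rewrite hX hsplit.
have hYe : expect_val (HP *m HP) psi = E 0 * E 0 * w 0 + P2 by rewrite hY hsplit.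
have hXa : expect_val HP psi = E 0 + a by rewrite hXe hw0e ha; ring.
have hEi : forall i : 'I_n.+2, i != 0 -> E 0 <= E i.
  by move=> i hi; apply: le_trans (ltW hE01) (hE1m i hi).
have hdp : 0 < E 1 - E 0 by rewrite subr_gt0.
have ha0 : 0 <= a.
  by apply: sumr_ge0 => i hi; rewrite mulr_ge0 // subr_ge0 hEi.
have haS : S * (E 1 - E 0) <= a.
  rewrite hS mulr_suml; apply: ler_sum => i hi; apply: ler_wpM2l => //.
  by rewrite lerD2r hE1m.
have hB0 : 0 <= B.
  apply: sumr_ge0 => i hi; rewrite mulr_ge0 // -realEsqr.
  apply: rpredB; first by apply: ger0_real; rewrite subr_ge0 hEi.
  by apply: ger0_real; rewrite mulr_ge0 // ler0n.
have h12 : 0 < 1 - 2 * S.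
  have ht : 0 < (Et0 + Et1) / 2 - (dM0 + dM1) / 2 - expect_val HP psi by rewrite subr_gt0.
  set t := _ - expect_val HP psi in ht.
  have hid : Et0 - E 0 + (Et1 - E 1) = 2 * t - (E 1 - E 0) + (dM0 + dM1) + 2 * a.
    rewrite /t hXa; by field; rewrite ?pnatr_eq0.
  have hre : Et0 - E 0 + (Et1 - E 1) \is Num.real.
    rewrite hid; apply: rpredD; last by apply: ger0_real; rewrite mulr_ge0 // ler0n.
    apply: rpredD; last by apply: gtr0_real; rewrite addr_gt0.
    apply: rpredB; last by apply: gtr0_real.
    by apply: gtr0_real; rewrite mulr_gt0 // ltr0n.
  have huv : Et0 - E 0 + (Et1 - E 1) < dM0 + dM1.
    apply: le_lt_trans (real_ler_norm hre) _.
    by apply: le_lt_trans (ler_normD _ _) (ltrD hbound0 hbound1).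
  have h1 : 0 < (E 1 - E 0) - 2 * a.
    have : 0 < dM0 + dM1 - (Et0 - E 0 + (Et1 - E 1)) by rewrite subr_gt0.
    rewrite hid => h.
    have -> : E 1 - E 0 - 2 * a = (dM0 + dM1 - (2 * t - (E 1 - E 0) + (dM0 + dM1) + 2 * a)) + 2 * t by ring.
    by rewrite addr_gt0 // mulr_gt0 // ltr0n.
  have h2 : 0 < (E 1 - E 0) * (1 - 2 * S).
    have h3 : 0 <= 2 * (a - S * (E 1 - E 0)) by rewrite mulr_ge0 ?ler0n // subr_ge0.
    have := ltr_leD h1 h3; rewrite add0r.
    have -> : E 1 - E 0 - 2 * a + 2 * (a - S * (E 1 - E 0)) = (E 1 - E 0) * (1 - 2 * S) by ring.
    by [].
  by rewrite -(pmulr_rgt0 _ hdp).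
split.
  rewrite -subr_ge0.
  have -> : 1 / 2 - S = (1 - 2 * S) / 2 by field; rewrite ?pnatr_eq0.
  by rewrite divr_ge0 ?ler0n // ltW.
rewrite -subr_ge0.
have -> : expect_val (HP *m HP) psi - expect_val HP psi ^+ 2 - (expect_val HP psi - E 0) ^+ 2
   = B + 2 * a ^+ 2 * (1 - 2 * S).
  rewrite hYe hXa hB hQ hw0e ha; ring.
by rewrite addr_ge0 // mulr_ge0 ?(ltW h12) // mulr_ge0 ?ler0n // exprn_ge0.
Qed.
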